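(* For $i=1,2$ let $1\to K_i\xrightarrow{\iota_i}A_i\xrightarrow{\pi_i}H_i\to1$ be exact sequences of Hopf algebras such that $\iota_i(K_i)=\mathcal{HZ}(A_i)$. Suppose $\omega:A_1\to A_2$ is a Hopf algebra isomorphism. Then there exist Hopf algebra isomorphisms $\underline\omega:K_1\to K_2$ and $\overline\omega:H_1\to H_2$ such that $\iota_2\underline\omega=\omega\iota_1$ and $\pi_2\omega=\overline\omega\pi_1$.
   Context: Hopf algebras over a field $k$, with bijective antipode. A sequence $1\to B\xrightarrow{\iota}A\xrightarrow{\pi}H\to1$ of Hopf algebra maps is exact if $\iota$ is injective, $\pi$ surjective, $\operatorname{Ker}\pi=AB^+$ ($B^+=\operatorname{Ker}\varepsilon$) and $B={}^{\mathrm{co}\,\pi}A=\{a:(\pi\otimes\mathrm{id})\Delta(a)=1\otimes a\}$. The Hopf center $\mathcal{HZ}(A)$ is the maximal central Hopf subalgebra of $A$. *)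

(* Defs.v *)
From HB Require Import structures.
From mathcomp Require Import all_boot all_order all_algebra.
Set Implicit Arguments.
Unset Strict Implicit.
Unset Printing Implicit Defensive.
Import Order.TTheory GRing.Theory.
Local Open Scope ring_scope.

(* MathComp has no tensor product, so an
   element of U (x) V is represented by a finite list of pure tensors
   [:: (u_1, v_1); ...] (meaning sum_i u_i (x) v_i), and two such lists are
   identified when they represent the same element of U (x) V.  Over a field,
   the canonical map U (x) V -> dual of (dual U tensor dual V) (bilinear forms on dual pairs) is
   injective, so two representatives are equal in U (x) V iff they agree
   against every pair of linear functionals. *)

Section Tensors.
Variable k : fieldType.

Definition tpair (U V : lmodType k) (f : {scalar U}) (g : {scalar V})
  (t : seq (U * V)) : k := \sum_(p <- t) f p.1 * g p.2.

Definition teq (U V : lmodType k) (t u : seq (U * V)) : Prop :=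
  forall (f : {scalar U}) (g : {scalar V}), tpair f g t = tpair f g u.

Definition teq3 (U V W : lmodType k) (t u : seq (U * V * W)) : Prop :=
  forall (f : {scalar U}) (g : {scalar V}) (h : {scalar W}),
    \sum_(p <- t) f p.1.1 * g p.1.2 * h p.2
    = \sum_(p <- u) f p.1.1 * g p.1.2 * h p.2.

Definition tin (U V : lmodType k) (P : U -> Prop) (Q : V -> Prop)
  (t : seq (U * V)) : Prop :=
  exists u : seq (U * V), (forall p, p \in u -> P p.1 /\ Q p.2) /\ teq t u.

Definition klinear (U V : lmodType k) (f : U -> V) : Prop :=
  forall (a : k) (x y : U), f (a *: x + y) = a *: f x + f y.

Definition tmap (U V U' V' : Type) (f : U -> U') (g : V -> V')
  (t : seq (U * V)) : seq (U' * V') := [seq (f p.1, g p.2) | p <- t].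

Record hopf_alg (A : algType k) := HopfAlg {
  comul : A -> seq (A * A);
  counit : A -> k;
  antipode : A -> A;
  comul_lin : forall (a : k) (x y : A),
    teq (comul (a *: x + y)) ([seq (a *: p.1, p.2) | p <- comul x] ++ comul y);
  comul1 : teq (comul 1) [:: (1, 1)];
  comulM : forall x y : A,
    teq (comul (x * y))
        [seq (p.1 * q.1, p.2 * q.2) | p <- comul x, q <- comul y];
  coassoc : forall x : A,
    teq3 [seq (q.1, q.2, p.2) | p <- comul x, q <- comul p.1]
         [seq (p.1, q.1, q.2) | p <- comul x, q <- comul p.2];
  counit_lin : klinear (counit : A -> k^o);
  counit1 : counit 1 = 1;
  counitM : forall x y, counit (x * y) = counit x * counit y;
  counitL : forall x, \sum_(p <- comul x) counit p.1 *: p.2 = x;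
  counitR : forall x, \sum_(p <- comul x) counit p.2 *: p.1 = x;
  antipode_lin : klinear antipode;
  antipodeL : forall x, \sum_(p <- comul x) antipode p.1 * p.2 = (counit x)%:A;
  antipodeR : forall x, \sum_(p <- comul x) p.1 * antipode p.2 = (counit x)%:A;
  antipode_bij : bijective antipode
}.

Section HopfNotions.
Variables (A B : algType k) (HA : hopf_alg A) (HB : hopf_alg B).

(* Hopf algebra map (= bialgebra map; it then commutes with antipodes) *)
Definition hopf_map (f : A -> B) : Prop :=
  [/\ klinear f, f 1 = 1, (forall x y, f (x * y) = f x * f y),
      (forall x, teq (comul HB (f x)) (tmap f f (comul HA x)))
    & (forall x, counit HB (f x) = counit HA x)].

Definition hopf_iso (f : A -> B) : Prop := hopf_map f /\ bijective f.

End HopfNotions.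

Section Exact.
Variables (K A H : algType k) (HK : hopf_alg K) (HA : hopf_alg A) (HH : hopf_alg H).

Definition coinv (pi : A -> H) (a : A) : Prop :=
  teq (tmap pi id (comul HA a)) [:: (1, a)].

(* elements of the left ideal A B^+, with B = iota(K) *)
Definition in_AKplus (iota : K -> A) (x : A) : Prop :=
  exists s : seq (A * K), (forall p, p \in s -> counit HK p.2 = 0) /\
    x = \sum_(p <- s) p.1 * iota p.2.

Definition exact_seq (iota : K -> A) (pi : A -> H) : Prop :=
  [/\ hopf_map HK HA iota, hopf_map HA HH pi, injective iota, (forall h : H, exists a, pi a = h)
    & ((forall x, pi x = 0 <-> in_AKplus iota x) /\
       (forall a, (exists b, a = iota b) <-> coinv pi a))].

End Exact.

Section HopfCenter.
Variables (A : algType k) (HA : hopf_alg A).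

Definition central_hopf_subalg (P : A -> Prop) : Prop :=
  [/\ P 1, (forall (a : k) x y, P x -> P y -> P (a *: x + y)),
      (forall x y, P x -> P y -> P (x * y)),
      (forall x, P x -> tin P P (comul HA x) /\ P (antipode HA x))
    & (forall x y, P x -> x * y = y * x)].

Definition is_hopf_center (P : A -> Prop) : Prop :=
  central_hopf_subalg P /\
  (forall Q, central_hopf_subalg Q -> forall x, Q x -> P x).

End HopfCenter.

End Tensors.

(* Main.v *)
From HB Require Import structures.
Require Import Defs.
From mathcomp Require Import all_boot all_order all_algebra.
From mathcomp Require Import boolp classical_sets functions.
Set Implicit Arguments.
Unset Strict Implicit.
Unset Printing Implicit Defensive.
Import Order.TTheory GRing.Theory.
Local Open Scope ring_scope.
Local Open Scope classical_set_scope.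

Definition mkscalar (k : fieldType) (U : lmodType k) (F : U -> k)
  (H : forall a x y, F (a *: x + y) = a * F x + F y) : {scalar U} :=
  HB.pack_for {scalar U} F (GRing.isLinear.Build k U k *%R F H).

Lemma mkscalarE (k : fieldType) (U : lmodType k) (F : U -> k) H x :
  @mkscalar k U F H x = F x.
Proof. by []. Qed.

Lemma hyper (k : fieldType) (U : lmodType k) (T : U -> Prop) (x : U) :
  T 0 -> (forall a u v, T u -> T v -> T (a *: u + v)) -> ~ T x ->
  exists F : {scalar U}, (forall t, T t -> F t = 0) /\ F x = 1.
Proof.
move=> T0 Tcl Tx.
pose clo (M : set U) := forall a u v, M u -> M v -> M (a *: u + v).
pose P : set (set U) := fun M => [/\ clo M, ~ M x & (M = set0 \/ T `<=` M)].
have [A [[Acl Ax AT] Amax]] : exists A, P A /\ forall B, A `<` B -> ~ P B.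
  apply: Zorn_bigcup => F FP Ftot; split.
  - move=> a u v [X1 FX1 X1u] [X2 FX2 X2v].
    have [X12|X21] := Ftot _ _ FX1 FX2.
      exists X2 => //; have [cl _ _] := FP _ FX2; apply: cl => //; exact: X12.
    exists X1 => //; have [cl _ _] := FP _ FX1; apply: cl => //; exact: X21.
  - by move=> [X FX Xx]; have [_ nx _] := FP _ FX.
  - have [[X [FX TX]]|nX] := pselect (exists X, F X /\ T `<=` X).
      by right => t Tt; exists X => //; exact: TX.
    left; apply/seteqP; split => // u [X FX Xu].
    have [_ _ [X0|TX]] := FP _ FX; first by rewrite X0 in Xu.
    by exfalso; apply: nX; exists X.
have TA : T `<=` A.
  case: AT => // A0; exfalso; apply: (Amax T); last by split => //; right.
  rewrite A0; split; first by []. by move/(_ 0 T0).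
have A0 : A 0 by exact: TA.
have ex v : exists c, A (v - c *: x).
  apply: contrapT => nv.
  pose B : set U := fun w => exists c m, A m /\ w = m + c *: v.
  apply: (Amax B); first split.
  - by move=> u Au; exists 0, u; split => //; rewrite scale0r addr0.
  - move=> BA.
    have : A v by apply: BA; exists 1, 0; split => //; rewrite add0r scale1r.
    by move=> Av; apply: nv; exists 0; rewrite scale0r subr0.
  - split.
    + move=> a u w [c1 [m1 [Am1 ->]]] [c2 [m2 [Am2 ->]]].
      exists (a * c1 + c2), (a *: m1 + m2); split; first exact: Acl.
      by rewrite scalerDr scalerDl scalerA addrACA.
    + move=> [c [m [Am xE]]].
      have [c0|cn0] := eqVneq c 0.
        by apply: Ax; rewrite xE c0 scale0r addr0.
      apply: nv; exists c^-1.
      have -> : v - c^-1 *: x = (- c^-1) *: m + 0.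
        rewrite xE scalerDr scalerA mulVf // scale1r addr0 scaleNr.
        by rewrite opprD addrCA subrr addr0.
      exact: Acl.
    + by right => t Tt; exists 0, t; rewrite scale0r addr0; split => //; exact: TA.
have uniq v c c' : A (v - c *: x) -> A (v - c' *: x) -> c = c'.
  move=> h1 h2; apply/eqP; apply: contraT => ncc.
  have h : A ((c' - c) *: x).
    have -> : (c' - c) *: x = (-1) *: (v - c' *: x) + (v - c *: x).
      by rewrite scaleN1r scalerBl opprB -[RHS]addrA addKr.
    exact: (Acl (-1) _ _ h2 h1).
  suff Axx : A x by case: (Ax Axx).
  have -> : x = (c' - c)^-1 *: ((c' - c) *: x) + 0.
    by rewrite addr0 scalerA mulVf ?scale1r // subr_eq0 eq_sym.
  exact: Acl.
pose F v := sval (cid (ex v)).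
have FP v : A (v - F v *: x) by rewrite /F; case: cid.
have Flin a u w : F (a *: u + w) = a * F u + F w.
  apply: (uniq (a *: u + w)); first exact: FP.
  have -> : a *: u + w - (a * F u + F w) *: x
          = a *: (u - F u *: x) + (w - F w *: x).
    by rewrite scalerDl -scalerA scalerBr opprD addrACA.
  by apply: Acl; apply: FP.
exists (mkscalar Flin); split => [t Tt|] /=.
  apply: (uniq t); first exact: FP.
  by rewrite scale0r subr0; exact: TA.
apply: (uniq x); first exact: FP.
by rewrite scale1r subrr.
Qed.


Local Close Scope classical_set_scope.

Lemma lin0 (k : fieldType) (U Z : lmodType k) (f : U -> Z)
  (H : forall a u u', f (a *: u + u') = a *: f u + f u') : f 0 = 0.
Proof.
have := H 1 0 0; rewrite !scale1r addr0 => /eqP.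
by rewrite -subr_eq0 opprD addrA subrr add0r oppr_eq0 => /eqP.
Qed.

Lemma linZ (k : fieldType) (U Z : lmodType k) (f : U -> Z)
  (H : forall a u u', f (a *: u + u') = a *: f u + f u') a u : f (a *: u) = a *: f u.
Proof. by have := H a u 0; rewrite !addr0 (lin0 H) addr0. Qed.

Lemma linD (k : fieldType) (U Z : lmodType k) (f : U -> Z)
  (H : forall a u u', f (a *: u + u') = a *: f u + f u') u u' : f (u + u') = f u + f u'.
Proof. by have := H 1 u u'; rewrite !scale1r. Qed.

Lemma linS (k : fieldType) (U Z : lmodType k) (f : U -> Z)
  (H : forall a u u', f (a *: u + u') = a *: f u + f u') (I : Type) (r : seq I)
  (P : pred I) (E : I -> U) :
  f (\sum_(j <- r | P j) E j) = \sum_(j <- r | P j) f (E j).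
Proof.
elim/big_rec2: _ => [|j y1 y2 _ <-]; first exact: lin0 H.
by rewrite (linD H).
Qed.

Lemma core (k : fieldType) (U U' Y Z : lmodType k) (i : {linear U -> U'})
  (iinj : injective i) (S : Y -> Prop)
  (Scl : forall a y y', S y -> S y' -> S (a *: y + y'))
  (beta : U -> Y -> Z)
  (b1 : forall y, S y -> forall a u u', beta (a *: u + u') y = a *: beta u y + beta u' y)
  (b2 : forall u a y y', beta u (a *: y + y') = a *: beta u y + beta u y')
  (n : nat) : forall (X : nat -> U) (Yf : nat -> Y), (forall l, S (Yf l)) ->
  (forall F : {scalar U'}, \sum_(l < n) F (i (X l)) *: Yf l = 0) ->
  \sum_(l < n) beta (X l) (Yf l) = 0.
Proof.
elim: n => [|n IH] X Yf SY prem; first by rewrite big_ord0.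
rewrite big_ord_recr /=.
have [[c Xn]|nXn] := pselect (exists c : nat -> k, X n = \sum_(l < n) c l *: X l).
  pose Y' l := c l *: Yf n + Yf l.
  have key (Z' : lmodType k) (g : U -> Y -> Z')
      (g1 : forall a u u', g (a *: u + u') (Yf n) = a *: g u (Yf n) + g u' (Yf n))
      (g2 : forall u a y y', g u (a *: y + y') = a *: g u y + g u y') :
      \sum_(l < n) g (X l) (Y' l) = \sum_(l < n) g (X l) (Yf l) + g (X n) (Yf n).
    rewrite /Y'.
    under eq_bigr do rewrite g2.
    rewrite big_split /= addrC; congr (_ + _).
    rewrite Xn (linS g1); apply: eq_bigr => l _.
    by rewrite (linZ g1).
  rewrite -key; last 2 first.
  - by move=> a u u'; apply: b1.
  - exact: b2.
  apply: IH => [l|F]; first exact: Scl.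
  rewrite (key _ (fun u y => F (i u) *: y)); first by have := prem F; rewrite big_ord_recr.
  - by move=> a u u'; rewrite !linearP /= scalerDl scalerA.
  - by move=> u a y y'; rewrite scalerDr !scalerA mulrC.
pose T (v : U') := exists c : nat -> k, v = \sum_(l < n) c l *: i (X l).
have T0 : T 0 by exists (fun _ => 0); rewrite big1 // => l _; rewrite scale0r.
have Tcl a u v : T u -> T v -> T (a *: u + v).
  move=> [c1 ->] [c2 ->]; exists (fun l => a * c1 l + c2 l).
  rewrite scaler_sumr -big_split /=; apply: eq_bigr => l _.
  by rewrite scalerDl scalerA.
have nT : ~ T (i (X n)).
  move=> [c E]; apply: nXn; exists c; apply: iinj.
  by rewrite E linear_sum; apply: eq_bigr => l _; rewrite linearZ.
have [F [FT Fx]] := hyper T0 Tcl nT.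
have FX (l : 'I_n) : F (i (X l)) = 0.
  apply: FT; exists (fun m : nat => (m == val l)%:R).
  rewrite (bigD1 l) //= eqxx scale1r big1 ?addr0 // => m /negbTE ml.
  by rewrite -val_eqE in ml; rewrite /= ml scale0r.
have Yn0 : Yf n = 0.
  have := prem F; rewrite big_ord_recr /= big1 ?add0r ?Fx ?scale1r //.
  by move=> l _; rewrite FX scale0r.
rewrite Yn0 IH ?add0r //.
  by have := b2 (X n) 1 0 0; rewrite !scale1r addr0 => /eqP; rewrite -subr_eq0 opprD addrA subrr add0r oppr_eq0 => /eqP.
move=> G; have := prem G; rewrite big_ord_recr /= Yn0 scaler0 addr0 //.
Qed.


Definition mklinear (k : fieldType) (U V : lmodType k) (f : U -> V)
  (H : forall a x y, f (a *: x + y) = a *: f x + f y) : {linear U -> V} :=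
  HB.pack_for {linear U -> V} f (GRing.isLinear.Build k U V *:%R f H).

Lemma sep (k : fieldType) (U : lmodType k) (v : U) :
  (forall G : {scalar U}, G v = 0) -> v = 0.
Proof.
move=> H; apply: contrapT => nv.
have [|||G [_ Gv]] := @hyper k U (fun w => w = 0) v => //.
  by move=> a u w -> ->; rewrite scaler0 addr0.
by move: (H G); rewrite Gv => /eqP; rewrite oner_eq0.
Qed.

Lemma list_core (k : fieldType) (U U' Y Z : lmodType k) (i : {linear U -> U'})
  (iinj : injective i) (S : Y -> Prop) (S0 : S 0)
  (Scl : forall a y y', S y -> S y' -> S (a *: y + y'))
  (beta : U -> Y -> Z)
  (b1 : forall y, S y -> forall a u u', beta (a *: u + u') y = a *: beta u y + beta u' y)
  (b2 : forall u a y y', beta u (a *: y + y') = a *: beta u y + beta u y')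
  (d : seq (U * Y)) : (forall p, p \in d -> S p.2) ->
  (forall F : {scalar U'}, \sum_(p <- d) F (i p.1) *: p.2 = 0) ->
  \sum_(p <- d) beta p.1 p.2 = 0.
Proof.
move=> Sd prem.
rewrite (big_nth (0, 0)) big_mkord.
apply: (@core k U U' Y Z i iinj S Scl beta b1 b2 (size d)
   (fun l => (nth (0,0) d l).1) (fun l => (nth (0,0) d l).2)).
  move=> l; have [ld|ld] := ltnP l (size d); first by apply: Sd; rewrite mem_nth.
  by rewrite nth_default.
by move=> F; have := prem F; rewrite (big_nth (0, 0)) big_mkord.
Qed.


Lemma bil_neg (k : fieldType) (U Y Z : lmodType k) (beta : U -> Y -> Z)
  (b2 : forall u a y y', beta u (a *: y + y') = a *: beta u y + beta u y') u y :
  beta u (- y) = - beta u y.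
Proof. by rewrite -scaleN1r (linZ (b2 u)) scaleN1r. Qed.

Lemma sum_cat_neg (k : fieldType) (U Y Z : lmodType k) (beta : U -> Y -> Z)
  (b2 : forall u a y y', beta u (a *: y + y') = a *: beta u y + beta u y')
  (t u : seq (U * Y)) :
  \sum_(p <- t ++ [seq (p.1, - p.2) | p <- u]) beta p.1 p.2
  = \sum_(p <- t) beta p.1 p.2 - \sum_(p <- u) beta p.1 p.2.
Proof.
rewrite big_cat big_map /= -sumrN; congr (_ + _); apply: eq_bigr => p _.
exact: bil_neg.
Qed.

Lemma teq_bil (k : fieldType) (U V Z : lmodType k) (t u : seq (U * V)) :
  teq t u -> forall beta : U -> V -> Z,
  (forall y a x x', beta (a *: x + x') y = a *: beta x y + beta x' y) ->
  (forall x a y y', beta x (a *: y + y') = a *: beta x y + beta x y') ->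
  \sum_(p <- t) beta p.1 p.2 = \sum_(p <- u) beta p.1 p.2.
Proof.
move=> tu beta b1 b2; apply/eqP; rewrite -subr_eq0; apply/eqP.
have idl : forall a (x y : U), idfun (a *: x + y) = a *: idfun x + idfun y by [].
rewrite -(sum_cat_neg b2).
apply: (@list_core k U U V Z (mklinear idl) (fun _ _ p => p) (fun _ => True)) => // F.
apply: sep => G; rewrite linear_sum /=.
rewrite [X in X = _](_ : _ = tpair F G t - tpair F G u); first by rewrite (tu F G) subrr.
rewrite big_cat big_map /= -sumrN; congr (_ + _); apply: eq_bigr => p _ /=;
  by rewrite linearZ /= ?linearN /= ?mulrN.
Qed.


Lemma teq_map (k : fieldType) (U V U' V' : lmodType k) (f : U -> U') (g : V -> V')
  (fl : klinear f) (gl : klinear g) (t u : seq (U * V)) :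
  teq t u -> teq (tmap f g t) (tmap f g u).
Proof.
move=> tu F G; rewrite /tpair !big_map /=.
pose beta := fun a b => (F (f a) * G (g b) : k^o).
have b1 : forall y a x x', beta (a *: x + x') y = a *: beta x y + beta x' y.
  by move=> y a x x'; rewrite /beta fl linearP /= mulrDl -mulrA.
have b2 : forall x a y y', beta x (a *: y + y') = a *: beta x y + beta x y'.
  by move=> x a y y'; rewrite /beta gl linearP /= mulrDr mulrCA.
exact: (teq_bil tu b1 b2).
Qed.

Lemma tinj (k : fieldType) (U U' : lmodType k) (i : U -> U') (il : klinear i)
  (iinj : injective i) (t u : seq (U * U)) :
  teq (tmap i i t) (tmap i i u) -> teq t u.
Proof.
move=> tu f g; apply/eqP; rewrite -subr_eq0; apply/eqP.
pose beta := fun a b => (f a * g b : k^o).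
have b2 : forall x a y y', beta x (a *: y + y') = a *: beta x y + beta x y'.
  by move=> x a y y'; rewrite /beta linearP /= mulrDr mulrCA.
rewrite /tpair -(sum_cat_neg b2).
apply: (@list_core k U U' U k^o (mklinear il) iinj (fun _ => True)) => //.
  by move=> y _ a x x'; rewrite /beta linearP /= mulrDl -mulrA.
move=> F; apply: iinj; rewrite [RHS](lin0 il) (linS il).
apply: sep => G; rewrite linear_sum /=.
have := tu F G; rewrite /tpair !big_map /= => E.
rewrite [X in X = _](_ : _ = \sum_(p <- t) F (i p.1) * G (i p.2) -
   \sum_(p <- u) F (i p.1) * G (i p.2)); first by rewrite E subrr.
have iN x : i (- x) = - i x by rewrite -scaleN1r (linZ il) scaleN1r.
rewrite big_cat big_map /= -sumrN; congr (_ + _); apply: eq_bigr => p _ /=.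
  by rewrite (linZ il) linearZ.
by rewrite (linZ il) linearZ /= iN linearN /= mulrN.
Qed.

Lemma teq3_tril (k : fieldType) (U V W Z : lmodType k) (t u : seq (U * V * W)) :
  teq3 t u -> forall g : U -> V -> W -> Z,
  (forall y z a x x', g (a *: x + x') y z = a *: g x y z + g x' y z) ->
  (forall x z a y y', g x (a *: y + y') z = a *: g x y z + g x y' z) ->
  (forall x y a z z', g x y (a *: z + z') = a *: g x y z + g x y z') ->
  \sum_(p <- t) g p.1.1 p.1.2 p.2 = \sum_(p <- u) g p.1.1 p.1.2 p.2.
Proof.
move=> tu g g1 g2 g3.
pose d := t ++ [seq (p.1.1, p.1.2, - p.2) | p <- u].
have gN x y z : g x y (- z) = - g x y z.
  by rewrite -scaleN1r (linZ (g3 x y)) scaleN1r.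
have D1 (f : {scalar U}) (h1 : {scalar V}) (h2 : {scalar W}) :
    \sum_(p <- d) f p.1.1 * h1 p.1.2 * h2 p.2 = 0.
  rewrite big_cat big_map /= (tu f h1 h2).
  rewrite -[RHS](subrr (\sum_(p <- u) f p.1.1 * h1 p.1.2 * h2 p.2)) -sumrN.
  by congr (_ + _); apply: eq_bigr => p _; rewrite linearN /= mulrN.
apply/eqP; rewrite -subr_eq0; apply/eqP.
have -> : \sum_(p <- t) g p.1.1 p.1.2 p.2 - \sum_(p <- u) g p.1.1 p.1.2 p.2
          = \sum_(p <- d) g p.1.1 p.1.2 p.2.
  rewrite big_cat big_map /= -sumrN; congr (_ + _); apply: eq_bigr => p _.
  by rewrite gN.
have idU : forall a (x y : U), idfun (a *: x + y) = a *: idfun x + idfun y by [].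
have idV : forall a (x y : V), idfun (a *: x + y) = a *: idfun x + idfun y by [].
have st1 (F : {scalar U}) (a : U) :
    \sum_(p <- d) F p.1.1 *: g a p.1.2 p.2 = 0.
  pose d' := [seq (p.1.2, F p.1.1 *: p.2) | p <- d].
  have L := @list_core k V V W Z (mklinear idV) (fun _ _ p => p) (fun _ => True)
    I (fun _ _ _ _ _ => I) (fun b c => g a b c) (fun y _ => g2 a y)
    (g3 a) d' (fun _ _ => I).
  have -> : \sum_(p <- d) F p.1.1 *: g a p.1.2 p.2 = \sum_(p <- d') g a p.1 p.2.
    by rewrite big_map; apply: eq_bigr => p _; rewrite (linZ (g3 _ _)).
  apply: L => G; rewrite big_map /=; apply: sep => H; rewrite linear_sum /=.
  rewrite -[RHS](D1 F G H); apply: eq_bigr => p _.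
  by rewrite linearZ /= linearZ /= mulrCA mulrA.
pose S (phi : U -> Z) := forall a x x', phi (a *: x + x') = a *: phi x + phi x'.
have := @list_core k U U (U -> Z) Z (mklinear idU) (fun _ _ p => p) S
  _ _ (fun x phi => phi x) _ _
  [seq (p.1.1, fun a => g a p.1.2 p.2) | p <- d].
rewrite big_map /=; apply.
- by move=> a x x'; rewrite /= scaler0 addr0.
- by move=> a y y' Sy Sy' b x x'; rewrite !fctE /= (Sy b x x') (Sy' b x x') scalerDr !scalerDr !scalerA mulrC addrACA.
- by move=> y Sy; apply: Sy.
- by [].
- by move=> p /mapP [q _ ->] a x x' /=; rewrite g1.
- move=> F; rewrite big_map /=; apply/funext => a; rewrite fct_sumE /=.
  exact: st1.
Qed.


Lemma hopf_antipode (k : fieldType) (A B : algType k) (HA : hopf_alg A)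
  (HB : hopf_alg B) (w : A -> B) : hopf_map HA HB w ->
  forall x, antipode HB (w x) = w (antipode HA x).
Proof.
case=> wl w1 wM wD we x.
have Sl := antipode_lin HA; have SBl := antipode_lin HB.
have conv y : \sum_(q <- comul HA y) antipode HB (w q.1) * w q.2
              = (counit HA y)%:A.
  rewrite -we -(antipodeL HB (w y)).
  have E := wD y.
  symmetry; rewrite (teq_bil E (beta := fun a b => antipode HB a * b)).
  - by rewrite big_map.
  - by move=> b a u u'; rewrite SBl mulrDl scalerAl.
  - by move=> u a b b'; rewrite mulrDr scalerAr.
have S1 : w (antipode HA x)
    = \sum_(p <- comul HA x) \sum_(q <- comul HA p.1)
        antipode HB (w q.1) * w q.2 * w (antipode HA p.2).
  rewrite -{1}(counitL HA x) (linS Sl) (linS wl); apply: eq_bigr => p _.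
  by rewrite -mulr_suml conv mulr_algl (linZ Sl) (linZ wl).
have S2 : antipode HB (w x)
    = \sum_(p <- comul HA x) \sum_(q <- comul HA p.2)
        antipode HB (w p.1) * w q.1 * w (antipode HA q.2).
  rewrite -{1}(counitR HA x) (linS wl) (linS SBl); apply: eq_bigr => p _.
  rewrite (linZ wl) (linZ SBl).
  under eq_bigr do rewrite -mulrA -wM.
  rewrite -mulr_sumr -(linS wl) (antipodeR HA) (linZ wl) w1.
  by rewrite mulr_algr.
have := teq3_tril (coassoc HA x)
  (g := fun a b c => antipode HB (w a) * w b * w (antipode HA c)).
rewrite !big_allpairs_dep /= S1 S2 => -> //.
- by move=> b c a u u'; rewrite wl SBl !mulrDl !scalerAl.
- by move=> u c a b b'; rewrite wl mulrDr mulrDl -scalerAr -scalerAl.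
- by move=> u b a c c'; rewrite Sl wl mulrDr scalerAr.
Qed.


Lemma teq_sym (k : fieldType) (U V : lmodType k) (t u : seq (U * V)) :
  teq t u -> teq u t.
Proof. by move=> h f g; rewrite h. Qed.

Lemma teq_trans (k : fieldType) (U V : lmodType k) (t u v : seq (U * V)) :
  teq t u -> teq u v -> teq t v.
Proof. by move=> h1 h2 f g; rewrite h1 h2. Qed.

Lemma tmap_comp (U V U' V' U'' V'' : Type) (f : U -> U') (g : V -> V')
  (f' : U' -> U'') (g' : V' -> V'') (s : seq (U * V)) :
  tmap f' g' (tmap f g s) = tmap (f' \o f) (g' \o g) s.
Proof. by rewrite /tmap -map_comp. Qed.

Lemma tmap_id (U V : Type) (f : U -> U) (g : V -> V) (s : seq (U * V)) :
  (forall x, f x = x) -> (forall x, g x = x) -> tmap f g s = s.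
Proof. by move=> hf hg; elim: s => //= [[a b] s ->] /=; rewrite hf hg. Qed.

Lemma bij_of (T1 T2 : Type) (f : T1 -> T2) :
  injective f -> (forall y, exists x, f x = y) -> bijective f.
Proof.
move=> fi fs; pose g y := sval (cid (fs y)).
have fg y : f (g y) = y by rewrite /g; case: cid.
by exists g => // x; apply: fi; rewrite fg.
Qed.

Lemma hopf_inv (k : fieldType) (A B : algType k) (HA : hopf_alg A)
  (HB : hopf_alg B) (w : A -> B) : hopf_iso HA HB w ->
  exists g, [/\ hopf_iso HB HA g, cancel w g & cancel g w].
Proof.
case=> [[wl w1 wM wD we] [g wg gw]].
have gl : klinear g.
  by move=> a y y'; rewrite -{1}(gw y) -{1}(gw y') -wl wg.
exists g; split => //; split; last by exists w.
split => //.
- by rewrite -w1 wg.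
- by move=> y y'; rewrite -{1}(gw y) -{1}(gw y') -wM wg.
- move=> y; have E := wD (g y); rewrite gw in E.
  have := teq_map gl gl E; rewrite tmap_comp tmap_id //= => E'.
  exact: teq_sym.
- by move=> y; rewrite -{2}(gw y) we.
Qed.

Lemma center_image (k : fieldType) (A B : algType k) (HA : hopf_alg A)
  (HB : hopf_alg B) (w : A -> B) (P : A -> Prop) :
  hopf_iso HA HB w -> central_hopf_subalg HA P ->
  central_hopf_subalg HB (fun y => exists x, P x /\ y = w x).
Proof.
move=> wiso; have wiso2 := wiso; have [g [_ wg gw]] := hopf_inv wiso2.
case: wiso => [[wl w1 wM wD we] _] [P1 Pcl PM PD Pc].
split.
- by exists 1; split.
- by move=> a _ _ [x [Px ->]] [y [Py ->]]; exists (a *: x + y); rewrite wl; split => //; apply: Pcl.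
- by move=> _ _ [x [Px ->]] [y [Py ->]]; exists (x * y); rewrite wM; split => //; apply: PM.
- move=> _ [x [Px ->]]; have [[u [uP ue]] PS] := PD x Px; split.
    exists (tmap w w u); split.
      move=> p /mapP [q qu ->] /=; have [q1 q2] := uP q qu.
      by split; [exists q.1 | exists q.2].
    exact: teq_trans (wD x) (teq_map wl wl ue).
  exists (antipode HA x); split => //.
  by rewrite (@hopf_antipode k A B HA HB w (And5 wl w1 wM wD we)).
- move=> _ z [x [Px ->]].
  by rewrite -(gw z) -wM Pc // wM.
Qed.


Lemma linB (k : fieldType) (U Z : lmodType k) (f : U -> Z)
  (H : forall a u u', f (a *: u + u') = a *: f u + f u') u u' :
  f (u - u') = f u - f u'.
Proof. by rewrite addrC -scaleN1r H scaleN1r addrC. Qed.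

Lemma tmap_ext (U V U' V' : Type) (f f' : U -> U') (g g' : V -> V') (s : seq (U * V)) :
  (forall x, f x = f' x) -> (forall x, g x = g' x) -> tmap f g s = tmap f' g' s.
Proof. by move=> hf hg; apply: eq_map => p; rewrite hf hg. Qed.

Local Close Scope ring_scope.
Unset Implicit Arguments.

Theorem proposition2p10 (k : fieldType)
  (K1 A1 H1 K2 A2 H2 : algType k)
  (HK1 : hopf_alg K1) (HA1 : hopf_alg A1) (HH1 : hopf_alg H1)
  (HK2 : hopf_alg K2) (HA2 : hopf_alg A2) (HH2 : hopf_alg H2)
  (iota1 : K1 -> A1) (pi1 : A1 -> H1) (iota2 : K2 -> A2) (pi2 : A2 -> H2)
  (ex1 : exact_seq HK1 HA1 HH1 iota1 pi1)
  (ex2 : exact_seq HK2 HA2 HH2 iota2 pi2)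
  (hz1 : is_hopf_center HA1 (fun a => exists b, a = iota1 b))
  (hz2 : is_hopf_center HA2 (fun a => exists b, a = iota2 b))
  (omega : A1 -> A2) (homega : hopf_iso HA1 HA2 omega) :
  exists (omega_u : K1 -> K2) (omega_o : H1 -> H2),
    [/\ hopf_iso HK1 HK2 omega_u, hopf_iso HH1 HH2 omega_o,
        (forall x, iota2 (omega_u x) = omega (iota1 x))
      & (forall a, pi2 (omega a) = omega_o (pi1 a))].
Proof.
have [g [giso wg gw]] := hopf_inv homega.
have homega2 := homega.
case: homega2 => [[wl w1 wM wD we] _].
have giso2 := giso.
case: giso2 => [[gl g1 gM gD ge] _].
case: ex1 => [[i1l i11 i1M i1D i1e] [p1l p11 p1M p1D p1e] i1inj p1surj [p1ker _]].
case: ex2 => [[i2l i21 i2M i2D i2e] [p2l p21 p2M p2D p2e] i2inj p2surj [p2ker _]].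
case: hz1 => c1 max1; case: hz2 => c2 max2.
have sub12 x : exists b, omega (iota1 x) = iota2 b.
  apply: (max2 _ (center_image homega c1)).
  by exists (iota1 x); split => //; exists x.
have sub21 y : exists b, g (iota2 y) = iota1 b.
  apply: (max1 _ (center_image giso c2)).
  by exists (iota2 y); split => //; exists y.
pose wu x := sval (cid (sub12 x)).
have wuE x : iota2 (wu x) = omega (iota1 x) by rewrite /wu; case: cid.
have wul : klinear wu.
  by move=> a x y; apply: i2inj; rewrite i2l !wuE i1l wl.
have wue x : counit HK2 (wu x) = counit HK1 x by rewrite -i2e wuE we i1e.
have wuiso : hopf_iso HK1 HK2 wu.
  split.
    split => //.
    - by apply: i2inj; rewrite wuE i11 w1 i21.
    - by move=> x y; apply: i2inj; rewrite i2M !wuE i1M wM.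
    - move=> x; apply: (tinj i2l i2inj).
      apply: teq_trans (teq_sym (i2D (wu x))) _; rewrite wuE.
      apply: teq_trans (wD _) _.
      apply: teq_trans (teq_map wl wl (i1D x)) _.
      rewrite !tmap_comp; apply: teq_sym; rewrite (tmap_ext _ wuE wuE).
      by move=> f h.
  apply: bij_of.
    by move=> x y E; apply: i1inj; apply: (can_inj wg); rewrite -!wuE E.
  move=> y; have [b E] := sub21 y; exists b; apply: i2inj.
  by rewrite wuE -E gw.
exists wu.
pose pre h := sval (cid (p1surj h)).
have preE h : pi1 (pre h) = h by rewrite /pre; case: cid.
pose wo h := pi2 (omega (pre h)).
have wd a a' : pi1 a = pi1 a' -> pi2 (omega a) = pi2 (omega a').
  move=> E; apply/eqP; rewrite -subr_eq0; apply/eqP.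
  have [s [s0 sE]] : in_AKplus HK1 iota1 (a - a')%R.
    by apply/p1ker; rewrite (linB p1l) E subrr.
  rewrite -(linB p2l) -(linB wl); apply/p2ker.
  exists [seq (omega p.1, wu p.2) | p <- s]; split.
    by move=> p /mapP [q qs ->] /=; rewrite wue s0.
  rewrite sE (linS wl) big_map; apply: eq_bigr => p _.
  by rewrite wM wuE.
have woE a : pi2 (omega a) = wo (pi1 a) by apply: wd; rewrite preE.
have wol : klinear wo.
  move=> a h h'; have [x <-] := p1surj h; have [y <-] := p1surj h'.
  by rewrite -p1l -!woE wl p2l.
exists wo; split => //.
split.
  split => //.
  - by rewrite -p11 -woE w1 p21.
  - move=> h h'; have [x <-] := p1surj h; have [y <-] := p1surj h'.
    by rewrite -p1M -!woE wM p2M.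
  - move=> h; have [a <-] := p1surj h; rewrite -woE.
    apply: teq_trans (p2D _) _.
    apply: teq_trans (teq_map p2l p2l (wD a)) _.
    rewrite tmap_comp (tmap_ext _ woE woE) -tmap_comp.
    apply: (teq_map wol wol); exact: teq_sym.
  - by move=> h; have [a <-] := p1surj h; rewrite -woE p2e we p1e.
have [ui uiK1 uiK2] : bijective wu by case: wuiso.
apply: bij_of.
  move=> h h'; have [a <-] := p1surj h; have [b <-] := p1surj h'.
  rewrite -!woE => E; apply/eqP; rewrite -subr_eq0; apply/eqP.
  rewrite -(linB p1l); apply/p1ker.
  have [s [s0 sE]] : in_AKplus HK2 iota2 (omega (a - b)%R).
    by apply/p2ker; rewrite (linB wl) (linB p2l) E subrr.
  exists [seq (g p.1, ui p.2) | p <- s]; split.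
    by move=> p /mapP [q qs ->] /=; rewrite -wue uiK2 s0.
  rewrite -[(a - b)%R]wg sE (linS gl) big_map; apply: eq_bigr => p _.
  by rewrite gM /= -{1}(uiK2 p.2) wuE wg.
move=> h2; have [a2 <-] := p2surj h2; exists (pi1 (g a2)).
by rewrite -woE gw.
Qed.
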